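(* Unambiguous NPWs are not Büchi-type with respect to DBW-realizable languages: there exists an unambiguous nondeterministic parity word automaton $\mathcal{A}=\langle\Sigma,Q,Q_0,\delta,\alpha\rangle$ such that $L(\mathcal{A})$ is recognized by some deterministic Büchi word automaton, yet there is no set $\alpha'\subseteq Q$ such that the Büchi automaton $\langle\Sigma,Q,Q_0,\delta,\alpha'\rangle$ recognizes $L(\mathcal{A})$.
   Context: An automaton $\langle\Sigma,Q,Q_0,\delta,\alpha\rangle$ has transition function $\delta:Q\times\Sigma\to2^Q$; a run on $w=a_1a_2\cdots$ is $r_0r_1\cdots$ with $r_0\in Q_0$, $r_{i+1}\in\delta(r_i,a_{i+1})$. Parity condition: $\alpha:Q\to\{0,\ldots,k\}$, a run is accepting iff the least priority of a state visited infinitely often is even. Büchi condition: $\alpha\subseteq Q$, a run is accepting iff it visits $\alpha$ infinitely often. An automaton is deterministic if $|Q_0|=1$ and $|\delta(q,a)|\le1$ for all $q,a$, and unambiguous if every accepted word has exactly one accepting run. NPW = nondeterministic parity word automaton; DBW = deterministic Büchi word automaton. *)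

(* Defs.v *)
From mathcomp Require Import all_boot.
Set Implicit Arguments. Unset Strict Implicit. Unset Printing Implicit Defensive.

(* Automata on infinite words over a finite alphabet Sigma with a finite
   state space Q.  An infinite word a_1 a_2 ... is a function w : nat -> Sigma
   with w i = a_{i+1}. *)
Record aut (Sigma Q : finType) := Aut {
  init  : {set Q};
  trans : Q -> Sigma -> {set Q}
}.

Definition word (Sigma : finType) := nat -> Sigma.

Definition is_run (Sigma Q : finType) (A : aut Sigma Q) (w : word Sigma)
  (r : nat -> Q) : Prop :=
  r 0 \in init A /\ forall i, r i.+1 \in trans A (r i) (w i).

Definition inf_often (Q : finType) (r : nat -> Q) (q : Q) : Prop :=
  forall n, exists m, n <= m /\ r m = q.

Definition parity_accepting (Q : finType) (alpha : Q -> nat) (r : nat -> Q) : Prop :=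
  exists p, ~~ odd p /\
    (exists q, inf_often r q /\ alpha q = p) /\
    (forall q, inf_often r q -> p <= alpha q).

Definition buchi_accepting (Q : finType) (alpha : {set Q}) (r : nat -> Q) : Prop :=
  forall n, exists m, n <= m /\ r m \in alpha.

Definition accepts_parity (Sigma Q : finType) (A : aut Sigma Q) (alpha : Q -> nat)
  (w : word Sigma) : Prop :=
  exists r, is_run A w r /\ parity_accepting alpha r.

Definition accepts_buchi (Sigma Q : finType) (A : aut Sigma Q) (alpha : {set Q})
  (w : word Sigma) : Prop :=
  exists r, is_run A w r /\ buchi_accepting alpha r.

Definition deterministic (Sigma Q : finType) (A : aut Sigma Q) : Prop :=
  #|init A| = 1 /\ forall q a, #|trans A q a| <= 1.

Definition unambiguous_parity (Sigma Q : finType) (A : aut Sigma Q) (alpha : Q -> nat) : Prop :=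
  forall w, accepts_parity A alpha w ->
    forall r1 r2, is_run A w r1 -> parity_accepting alpha r1 ->
                  is_run A w r2 -> parity_accepting alpha r2 -> r1 = r2.

(* Main.v *)
Require Import Defs.
From mathcomp Require Import all_boot.
From HB Require Import structures.
From Stdlib Require Import Classical FunctionalExtensionality.
Set Implicit Arguments. Unset Strict Implicit.

Inductive st := I | Q0 | P | SA | SB | T | D0 | Ya | Yb.
Definition st2n (s : st) : nat := match s with I => 0 | Q0 => 1 | P => 2 | SA => 3 | SB => 4 | T => 5 | D0 => 6 | Ya => 7 | Yb => 8 end.
Lemma st2n_lt s : st2n s < 9. Proof. by case: s. Qed.
Definition st2o (s : st) : 'I_9 := Ordinal (st2n_lt s).
Definition o2st (o : 'I_9) : st := match val o with 0 => I | 1 => Q0 | 2 => P | 3 => SA | 4 => SB | 5 => T | 6 => D0 | 7 => Ya | _ => Yb end.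
Lemma st2oK : cancel st2o o2st. Proof. by case. Qed.
HB.instance Definition _ := Finite.copy st (can_type st2oK).

Definition f (q : st) (x : bool) : st :=
  match q with
  | I | Q0 | P => if x then Q0 else (if q is P then Q0 else P)
  | SA | SB | T => if x then (if q is SB then T else SA) else SB
  | D0 => if x then Ya else SB
  | Ya | Yb => if x then Ya else Yb
  end.

Definition transA (q : st) (x : bool) : {set st} :=
  if (q == I) && ~~ x then set0 else [set f q x].

Definition A : aut bool st := Aut [set I; SA] transA.
Definition D : aut bool st := Aut [set D0] (fun q x => [set f q x]).
Definition alpha (q : st) : nat := match q with Q0 => 2 | T => 0 | _ => 1 end.
Definition beta : {set st} := [set Ya; T].

Fixpoint run (s : st) (w : word bool) (n : nat) : st :=
  match n with 0 => s | n'.+1 => f (run s w n') (w n') end.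

Definition Ga (w : word bool) := forall n, exists m, n <= m /\ w m = true.
Definition Gb (w : word bool) := forall n, exists m, n <= m /\ w m = false.
Definition Fa (w : word bool) := exists N, forall m, N <= m -> w m = true.
Definition BA (w : word bool) := forall N, exists n, N <= n /\ w n = false /\ w n.+1 = true.
Definition L (w : word bool) := (w 0 = true /\ Ga w) \/ (Ga w /\ Gb w).

Definition c1 (q : st) : bool := match q with I | Q0 | P => true | _ => false end.
Definition c2 (q : st) : bool := match q with SA | SB | T => true | _ => false end.

Lemma c1f q x : c1 q -> c1 (f q x). Proof. by case: q; case: x. Qed.
Lemma c2f q x : c2 q -> c2 (f q x). Proof. by case: q; case: x. Qed.
Lemma fT q x : f q x = T -> q = SB /\ x = true. Proof. by case: q; case: x. Qed.
Lemma fSB q x : f q x = SB -> x = false. Proof. by case: q; case: x. Qed.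

Lemma stepA w r : is_run A w r -> forall n, r n.+1 = f (r n) (w n).
Proof.
move=> [_ H] n; move: (H n); rewrite /= /transA.
by case: ifP => _; [rewrite in_set0 | move/set1P].
Qed.

Lemma stepD w r : is_run D w r -> forall n, r n.+1 = f (r n) (w n).
Proof. by move=> [_ H] n; move: (H n) => /set1P. Qed.

Lemma parity_inv r : parity_accepting alpha r ->
  inf_often r T \/ (inf_often r Q0 /\ forall q, inf_often r q -> q = Q0).
Proof.
move=> [p [ev [[q [Hq Ha]] Hmin]]].
case: q Hq Ha => Hq Ha; subst p => //; first (by right; split => // q' /Hmin; case: q').
by left.
Qed.

Lemma acc_T r : inf_often r T -> parity_accepting alpha r.
Proof. by move=> H; exists 0; split => //; split => //; exists T. Qed.

Lemma acc_Q0 r : inf_often r Q0 -> (forall q, inf_often r q -> q = Q0) ->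
  parity_accepting alpha r.
Proof.
move=> H1 H2; exists 2; split => //; split; first by exists Q0.
by move=> q /H2 ->.
Qed.

Lemma inv_c1 w r : (forall n, r n.+1 = f (r n) (w n)) -> c1 (r 0) -> forall n, c1 (r n).
Proof. by move=> Hs H0; elim => // n IH; rewrite Hs c1f. Qed.
Lemma inv_c2 w r : (forall n, r n.+1 = f (r n) (w n)) -> c2 (r 0) -> forall n, c2 (r n).
Proof. by move=> Hs H0; elim => // n IH; rewrite Hs c2f. Qed.

Lemma C1_acc w r : (forall n, r n.+1 = f (r n) (w n)) -> c1 (r 0) ->
  parity_accepting alpha r -> Fa w.
Proof.
move=> Hs H0 /parity_inv [HT|[_ HQ]].
  by case: (HT 0) => m [_ E]; move: (inv_c1 Hs H0 m); rewrite E.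
have nP : ~ inf_often r P by move/HQ.
apply: NNPP => nF; apply: nP => n.
apply: NNPP => nE; apply: nF; exists n => m Hm.
case E: (w m) => //; exfalso.
have := inv_c1 Hs H0 m.
case E2: (r m) => // _.
- by apply: nE; exists m.+1; split; [apply: leqW | rewrite Hs E2 E].
- by apply: nE; exists m.+1; split; [apply: leqW | rewrite Hs E2 E].
- by apply: nE; exists m; split.
Qed.

Lemma T_BA w r : (forall n, r n.+1 = f (r n) (w n)) -> inf_often r T -> BA w.
Proof.
move=> Hs HT N; case: (HT N.+2) => m [Hm E].
case: m Hm E => [|[|k]] //= Hk E.
rewrite Hs in E; case/fT: E => E1 E2.
rewrite Hs in E1; move/fSB: E1 => E1.
by exists k; split.
Qed.

Lemma BA_T w r : (forall n, r n.+1 = f (r n) (w n)) ->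
  (forall n, w n = false -> r n.+1 = SB) -> BA w -> inf_often r T.
Proof.
move=> Hs Hb HB N; case: (HB N) => n [Hn [E1 E2]].
by exists n.+2; split; [apply: leqW; apply: leqW | rewrite Hs (Hb _ E1) E2].
Qed.

Lemma BA_GaGb w : BA w -> Ga w /\ Gb w.
Proof.
move=> H; split => N; case: (H N) => n [Hn [E1 E2]].
  by exists n.+1; split => //; apply: leqW.
by exists n.
Qed.

Lemma GaGb_BA w : Ga w -> Gb w -> BA w.
Proof.
move=> Ha Hb N; case: (Hb N) => m [Hm Em]; case: (Ha m) => k [Hk Ek].
have [d Hd] : exists d, k = m + d by exists (k - m); rewrite subnKC.
subst k; clear Hk; elim: d m Hm Em Ek => [|d IH] m Hm Em Ek.
  by rewrite addn0 Em in Ek.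
case E: (w m.+1).
  by exists m.
apply: (IH m.+1) => //; first by apply: leqW.
by rewrite addSnnS.
Qed.

Lemma Fa_Ga w : Fa w -> Ga w.
Proof. by move=> [N HN] n; exists (maxn N n); split; [apply: leq_maxr | apply: HN; apply: leq_maxl]. Qed.

Lemma A_L w : accepts_parity A alpha w -> L w.
Proof.
move=> [r [Hr Hacc]]; have Hs := stepA Hr.
have Hin := Hr.1; rewrite /= in_set2 in Hin.
case/orP: Hin => /eqP H0.
- left; split; last by apply: Fa_Ga; apply: (C1_acc Hs) => //; rewrite H0.
  move: (Hr.2 0); rewrite /= /transA H0 /=.
  by case: (w 0) => //; rewrite in_set0.
- right; apply: BA_GaGb.
  case/parity_inv: Hacc => [HT|[HQ _]]; first by apply: (T_BA Hs).
  by case: (HQ 0) => m [_ E]; move: (inv_c2 Hs); rewrite H0 => /(_ isT m); rewrite E.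
Qed.

Lemma run_step s w n : run s w n.+1 = f (run s w n) (w n).
Proof. by []. Qed.

Lemma fnotI q x : f q x != I. Proof. by case: q; case: x. Qed.

Lemma run_isA s w : s \in [set I; SA] -> (s = I -> w 0 = true) -> is_run A w (run s w).
Proof.
move=> Hs Hw; split => // i; rewrite /= /transA.
case: ifP => [/andP[/eqP E Hx]|_]; last by apply/set1P.
exfalso; case: i E Hx => [|i] /= E Hx.
  by rewrite (Hw E) in Hx.
by move: (fnotI (run s w i) (w i)); rewrite E.
Qed.

Lemma L_A w : L w -> accepts_parity A alpha w.
Proof.
case: (classic (Gb w)) => HGb.
  move=> HL; have Ha : Ga w by case: HL => [[]|[]].
  exists (run SA w); split; first by apply: run_isA => //; rewrite !inE eqxx orbT.
  apply: acc_T; apply: (BA_T (r := run SA w) (w := w)) => //; last by apply: GaGb_BA.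
  move=> n En; rewrite run_step En.
  by have := inv_c2 (r := run SA w) (w := w) (fun _ => erefl) isT n; case: (run SA w n).
case => [[H0 Ha]|[_ Hb]] //.
have [N HN] : Fa w.
  apply: NNPP => nF; apply: HGb => n; apply: NNPP => nE; apply: nF.
  exists n => m Hm; case E: (w m) => //; exfalso; apply: nE; by exists m.
exists (run I w); split; first by apply: run_isA => //; rewrite !inE eqxx.
have HQ : forall m, N < m -> run I w m = Q0.
  case => // m Hm; rewrite run_step HN //.
  by have := inv_c1 (r := run I w) (w := w) (fun _ => erefl) isT m; case: (run I w m).
apply: acc_Q0.
  by move=> n; exists (maxn N n).+1; split; [apply: leqW; apply: leq_maxr | apply: HQ; rewrite ltnS leq_maxl].
move=> q Hq; case: (Hq N.+1) => m [Hm <-]; exact: HQ.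
Qed.

Lemma D_L w : accepts_buchi D beta w <-> L w.
Proof.
have Hrun : forall r, is_run D w r -> forall n, r n = run D0 w n.
  move=> r Hr; have Hs := stepD Hr; elim => [|n IH]; first by move: Hr.1 => /set1P.
  by rewrite Hs IH.
have HisD : is_run D w (run D0 w) by split => //; [apply/set1P | move=> i; apply/set1P].
case E0: (w 0).
- have HY : forall n, run D0 w n.+1 = if w n then Ya else Yb.
    elim => [|n IH]; first by rewrite /= E0.
    by rewrite run_step IH; case: (w n); case: (w n.+1).
  split.
  + move=> [r [Hr Hb]]; left; split => // n.
    case: (Hb n.+1) => m [Hm]; rewrite Hrun //.
    case: m Hm => [|m] Hm; first by [].
    rewrite HY !inE; case E: (w m) => // _; by exists m.
  + move=> HL; have Ha : Ga w by case: HL => [[]|[]].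
    exists (run D0 w); split => // n; case: (Ha n) => m [Hm E].
    by exists m.+1; split; [apply: leqW | rewrite HY E !inE eqxx].
- have Hc2 : forall n, c2 (run D0 w n.+1).
    elim => [|n IH]; first by rewrite /= E0.
    by rewrite run_step c2f.
  have Hb : forall n, w n = false -> run D0 w n.+1 = SB.
    case => [|n] En; first by rewrite /= E0.
    by rewrite run_step En; move: (Hc2 n); case: (run D0 w n.+1).
  split.
  + move=> [r [Hr HB]]; right; apply: BA_GaGb; apply: (T_BA (r := run D0 w)) => // n.
    case: (HB n.+1) => m [Hm]; rewrite Hrun //.
    case: m Hm => [|m] Hm; first by [].
    rewrite !inE; move: (Hc2 m); case E: (run D0 w m.+1) => // _ _.
    by exists m.+1; split => //; apply: ltnW.
  + case => [[E _]|[Ha Hgb]]; first by rewrite E0 in E.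
    exists (run D0 w); split => // n.
    case: (BA_T (r := run D0 w) (w := w) (fun _ => erefl) Hb (GaGb_BA Ha Hgb) n) => m [Hm E].
    by exists m; split => //; rewrite E !inE eqxx orbT.
Qed.

Theorem proposition7 :
  exists (Sigma Q : finType) (A : aut Sigma Q) (alpha : Q -> nat),
    unambiguous_parity A alpha /\
    (exists (Q' : finType) (D : aut Sigma Q') (beta : {set Q'}),
        deterministic D /\
        forall w, accepts_buchi D beta w <-> accepts_parity A alpha w) /\
    ~ (exists alpha' : {set Q},
        forall w, accepts_buchi A alpha' w <-> accepts_parity A alpha w).
Proof.
exists (bool : finType), st, A, alpha; split; [|split].
- move=> w _ r1 r2 H1 A1 H2 A2.
  have S1 := stepA H1; have S2 := stepA H2.
  have I1 := H1.1; have I2 := H2.1; rewrite /= !inE in I1 I2.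
  have same : r1 0 = r2 0 -> r1 = r2.
    move=> E; apply: functional_extensionality; elim => // n IH.
    by rewrite S1 S2 IH.
  case/orP: I1 => /eqP E1; case/orP: I2 => /eqP E2; try (apply: same; congruence).
  + have [N HN] := C1_acc S1 (etrans (congr1 c1 E1) erefl) A1.
    case/parity_inv: A2 => [HT|[HQ _]].
      by case: (T_BA S2 HT N) => n [Hn [E _]]; rewrite HN in E.
    by case: (HQ 0) => m [_ E]; move: (inv_c2 S2 (r := r2)); rewrite E2 => /(_ isT m); rewrite E.
  + have [N HN] := C1_acc S2 (etrans (congr1 c1 E2) erefl) A2.
    case/parity_inv: A1 => [HT|[HQ _]].
      by case: (T_BA S1 HT N) => n [Hn [E _]]; rewrite HN in E.
    by case: (HQ 0) => m [_ E]; move: (inv_c2 S1 (r := r1)); rewrite E1 => /(_ isT m); rewrite E.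
- exists st, D, beta; split.
    by split => [|q a]; rewrite /= cards1.
  move=> w; rewrite D_L; split; [apply: L_A | apply: A_L].
- move=> [al Hal].
  have Ha : accepts_parity A alpha (fun _ => true).
    by apply: L_A; left; split => // n; exists n.
  move/Hal: Ha => [r [Hr Hb]].
  have Hs := stepA Hr; have Hi := Hr.1; rewrite /= !inE in Hi.
  case/orP: Hi => /eqP E0.
  + have HQ : forall n, r n.+1 = Q0.
      elim => [|n IH]; by rewrite Hs ?E0 ?IH.
    have Hin : Q0 \in al.
      by case: (Hb 1) => [[|m]] [Hm]; [by [] | rewrite HQ].
    pose w1 : word bool := fun n => n == 0.
    have : accepts_buchi A al w1.
      exists (run I w1); split; first by apply: run_isA => //; rewrite !inE eqxx.
      have H2 : forall k, run I w1 k.*2.+1 = Q0.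
        elim => [|k IH] //. by rewrite doubleS run_step [run I w1 k.*2.+2]run_step IH.
      move=> n; exists n.*2.+1; split; last by rewrite H2.
      by rewrite -addnn; apply: leqW; apply: leq_addr.
    move/Hal/A_L; case => [[_ Hg]|[Hg _]];
      by case: (Hg 1) => [[|m]] [].
  + have HS : forall n, r n = SA.
      elim => [|n IH] //; by rewrite Hs IH.
    have Hin : SA \in al.
      by case: (Hb 0) => m [_]; rewrite HS.
    pose w2 : word bool := fun n => n != 0.
    have : accepts_buchi A al w2.
      exists (run SA w2); split; first by apply: run_isA => //; rewrite !inE eqxx orbT.
      have H3 : forall k, run SA w2 k.+3 = SA.
        elim => [|k IH] //. by rewrite run_step IH.
      move=> n; exists n.+3; split; last by rewrite H3.
      by apply: leqW; apply: leqW; apply: leqW.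
    move/Hal/A_L; case => [[E _]|[_ Hg]] //.
    by case: (Hg 1) => [[|m]] [].
Qed.
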